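(* Let $V$ and $W$ be separable real Hilbert spaces with inner products $a(\cdot,\cdot)$ and $b(\cdot,\cdot)$ and induced norms $\|\cdot\|_a$, $\|\cdot\|_b$, and let $\gamma:V\to W$ be a compact linear operator. Let $V_h$ be a finite-dimensional space with $\dim V_h=d$, such that $V$ and $V_h$ are subspaces of a common real vector space, and set $V(h):=V+V_h$. Let $\widehat a(\cdot,\cdot)$ be a symmetric positive semidefinite bilinear form on $V(h)$ whose restriction to $V_h$ is an inner product and which satisfies $\widehat a(u,v)=a(u,v)$ for all $u,v\in V$; write $\|v\|_a:=\widehat a(v,v)^{1/2}$ for $v\in V(h)$ (a seminorm). Let $\widehat\gamma:V(h)\to W$ be a (compact) linear operator with $\widehat\gamma u=\gamma u$ for $u\in V$. Define $P_h:V(h)\to V_h$ by $\widehat a(u-P_hu,v_h)=0$ for all $v_h\in V_h$. Define, for $k\ge 1$ (with $k\le \dim V$), $$\mu_k:=\sup_{H_k\subset V,\ \dim H_k=k}\ \inf_{v\in H_k\setminus\{0\}}\frac{b(\gamma v,\gamma v)}{a(v,v)},$$ and for $1\le k\le d$, $$\mu_{k,h}:=\max_{H_{k,h}\subset V_h,\ \dim H_{k,h}=k}\ \min_{v_h\in H_{k,h}\setminus\{0\}}\frac{b(\widehat\gamma v_h,\widehat\gamma v_h)}{\widehat a(v_h,v_h)},$$ so that $\mu_{1,h}\ge\cdots\ge\mu_{d',h}>\mu_{d'+1,h}=\cdots=\mu_{d,h}=0$ for some $d'\le d$. Suppose there is a number $C_h\ge 0$ such that $$\|\widehat\gamma(I-P_h)v\|_b\le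 C_h\,\|(I-P_h)v\|_a\qquad\forall v\in V(h).$$ Then $\mu_k\le \mu_{k,h}+C_h^2$ for $k=1,\dots,d$ (with $k\le\dim V$). Consequently, writing $\lambda_k:=1/\mu_k$ (with $\lambda_k:=+\infty$ if $\mu_k=0$) and $\lambda_{k,h}:=1/\mu_{k,h}$ for $1\le k\le d'$, $$\lambda_k\ \ge\ \frac{\lambda_{k,h}}{1+C_h^2\lambda_{k,h}},\qquad k=1,\dots,d'.$$ No positive definiteness of $\widehat a$ on $V(h)$ is assumed.
   Context: The numbers $\mu_k$ are the eigenvalues (in nonincreasing order, with multiplicity, possibly including $0$) of the compact self-adjoint positive semidefinite operator $G\gamma:V\to V$, where $G:W\to V$ is defined by $a(Gf,v)=b(f,\gamma v)$ for all $v\in V$; equivalently they are the eigenvalues $\mu$ of $b(\gamma u,\gamma v)=\mu\,a(u,v)$ for all $v\in V$, and $\lambda_k=1/\mu_k$ are the eigenvalues of $a(u,v)=\lambda\, b(\gamma u,\gamma v)$. The $\mu_{k,h}$ are the eigenvalues of the discrete problem $b(\widehat\gamma u_h,\widehat\gamma v_h)=\mu_h\widehat a(u_h,v_h)$ for all $v_h\in V_h$. *)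

(* Defs.v *)
From HB Require Import structures.
From mathcomp Require Import all_boot all_order all_algebra.
From mathcomp Require Import classical_sets reals constructive_ereal.
Set Implicit Arguments. Unset Strict Implicit. Unset Printing Implicit Defensive.
Import Order.TTheory GRing.Theory Num.Theory.
Local Open Scope ring_scope.
Local Open Scope classical_set_scope.

Section Defs.
Variable R : realType.

Definition subspace (X : lmodType R) (S : set X) :=
  S 0 /\ forall (c : R) u v, S u -> S v -> S (c *: u + v).

Definition sumset (X : lmodType R) (S T : set X) : set X :=
  fun z => exists u w, S u /\ T w /\ z = u + w.

Definition symmetric_on (X : lmodType R) (S : set X) (f : X -> X -> R) :=
  forall u v, S u -> S v -> f u v = f v u.

(* linearity in the first argument (with symmetry: bilinear) *)
Definition bilinear_on (X : lmodType R) (S : set X) (f : X -> X -> R) :=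
  forall (c : R) u v w, S u -> S v -> S w -> f (c *: u + v) w = c * f u w + f v w.

Definition psd_on (X : lmodType R) (S : set X) (f : X -> X -> R) :=
  forall u, S u -> 0 <= f u u.

Definition inner_product_on (X : lmodType R) (S : set X) (f : X -> X -> R) :=
  [/\ symmetric_on S f, bilinear_on S f & forall u, S u -> u != 0 -> 0 < f u u].

Definition linear_on (X Y : lmodType R) (S : set X) (g : X -> Y) :=
  forall (c : R) u v, S u -> S v -> g (c *: u + v) = c *: g u + g v.

Definition fnorm (X : lmodType R) (f : X -> X -> R) (u : X) : R := Num.sqrt (f u u).

Definition cauchy_in (X : lmodType R) (f : X -> X -> R) (u : nat -> X) :=
  forall e : R, 0 < e -> exists N, forall m n, (N <= m)%N -> (N <= n)%N ->
    fnorm f (u m - u n) < e.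

Definition converges_to (X : lmodType R) (f : X -> X -> R) (u : nat -> X) (x : X) :=
  forall e : R, 0 < e -> exists N, forall n, (N <= n)%N -> fnorm f (u n - x) < e.

Definition complete_on (X : lmodType R) (S : set X) (f : X -> X -> R) :=
  forall u : nat -> X, (forall n, S (u n)) -> cauchy_in f u ->
    exists2 x, S x & converges_to f u x.

Definition separable_on (X : lmodType R) (S : set X) (f : X -> X -> R) :=
  exists s : nat -> X, (forall n, S (s n)) /\
    forall x, S x -> forall e : R, 0 < e -> exists n, fnorm f (x - s n) < e.

Definition compact_on (X Y : lmodType R) (S : set X) (f : X -> X -> R)
    (g : X -> Y) (bY : Y -> Y -> R) :=
  forall u : nat -> X, (forall n, S (u n)) ->
    (exists M : R, forall n, fnorm f (u n) <= M) ->
    exists phi : nat -> nat, (forall n, (phi n < phi n.+1)%N) /\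
      exists y : Y, converges_to bY (fun n => g (u (phi n))) y.

Definition independent (X : lmodType R) (k : nat) (e : 'I_k -> X) :=
  forall c : 'I_k -> R, \sum_(i < k) c i *: e i = 0 -> forall i, c i = 0.

(* e spans a k-dimensional subspace of S *)
Definition dim_family (X : lmodType R) (S : set X) (k : nat) (e : 'I_k -> X) :=
  (forall i, S (e i)) /\ independent e.

Definition basis_of_set (X : lmodType R) (S : set X) (k : nat) (e : 'I_k -> X) :=
  dim_family S e /\
  forall x, S x -> exists c : 'I_k -> R, x = \sum_(i < k) c i *: e i.

Definition rayleigh_inf (X Y : lmodType R) (A : X -> X -> R) (g : X -> Y)
    (b : Y -> Y -> R) (k : nat) (e : 'I_k -> X) : R :=
  inf [set r : R | exists c : 'I_k -> R,
        let v := \sum_(i < k) c i *: e i in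
        v != 0 /\ r = b (g v) (g v) / A v v].

Definition minmax (X Y : lmodType R) (S : set X) (A : X -> X -> R) (g : X -> Y)
    (b : Y -> Y -> R) (k : nat) : R :=
  sup [set rayleigh_inf A g b e | e in [set e : 'I_k -> X | dim_family S e]].

Definition recip_ext (m : R) : \bar R :=
  if m == 0 then +oo%E else (m^-1)%:E.

End Defs.

(* Main.v *)
Require Import Defs.
From HB Require Import structures.
From mathcomp Require Import all_boot all_order all_algebra.
From mathcomp Require Import boolp classical_sets reals constructive_ereal.
From mathcomp Require Import ring lra.
Import Order.TTheory GRing.Theory Num.Theory.
Local Open Scope ring_scope.
Local Open Scope classical_set_scope.
Set Implicit Arguments. Unset Strict Implicit. Unset Printing Implicit Defensive.

Section Generic.
Variable R : realType.
Variable X : lmodType R.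

Lemma sub_add (S : set X) u v : subspace S -> S u -> S v -> S (u + v).
Proof. by case=> _ H Su Sv; have := H 1 u v Su Sv; rewrite scale1r. Qed.

Lemma sub_scale (S : set X) c u : subspace S -> S u -> S (c *: u).
Proof. by case=> S0 H Su; have := H c u 0 Su S0; rewrite addr0. Qed.

Lemma sub_sub (S : set X) u v : subspace S -> S u -> S v -> S (u - v).
Proof.
move=> hS Su Sv; have := sub_add hS (sub_scale (-1) hS Sv) Su.
by rewrite scaleN1r addrC.
Qed.

Lemma sub_sum (S : set X) (I : Type) (r : seq I) (c : I -> R) (e : I -> X) :
  subspace S -> (forall i, S (e i)) -> S (\sum_(i <- r) c i *: e i).
Proof.
move=> hS He; elim: r => [|i r IH]; first by rewrite big_nil; case: hS.
by rewrite big_cons; apply: sub_add => //; apply: sub_scale.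
Qed.

Lemma sumset_sub (S T : set X) : subspace S -> subspace T -> subspace (sumset S T).
Proof.
move=> [S0 HS] [T0 HT]; split; first by exists 0, 0; rewrite addr0.
move=> c z1 z2 [u1 [w1 [Su1 [Tw1 ->]]]] [u2 [w2 [Su2 [Tw2 ->]]]].
exists (c *: u1 + u2), (c *: w1 + w2); do 2?split; [exact: HS|exact: HT|].
by rewrite scalerDr addrACA.
Qed.

Lemma sumset_l (S T : set X) u : subspace T -> S u -> sumset S T u.
Proof. by case=> T0 _ Su; exists u, 0; rewrite addr0. Qed.

Lemma sumset_r (S T : set X) u : subspace S -> T u -> sumset S T u.
Proof. by case=> S0 _ Tu; exists 0, u; rewrite add0r. Qed.

Section Form.
Variables (S : set X) (f : X -> X -> R).
Hypotheses (hS : subspace S) (hsym : symmetric_on S f) (hbil : bilinear_on S f).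

Lemma f0l w : S w -> f 0 w = 0.
Proof.
move=> Sw; have S0 : S 0 by case: hS.
have := hbil 1 S0 S0 Sw; rewrite scale1r addr0 mul1r.
by move=> /(congr1 (fun x => x - f 0 w)); rewrite subrr addrK.
Qed.

Lemma fDl u v w : S u -> S v -> S w -> f (u + v) w = f u w + f v w.
Proof. by move=> Su Sv Sw; have := hbil 1 Su Sv Sw; rewrite scale1r mul1r. Qed.

Lemma fZl c u w : S u -> S w -> f (c *: u) w = c * f u w.
Proof.
move=> Su Sw; have S0 : S 0 by case: hS.
by have := hbil c Su S0 Sw; rewrite addr0 f0l // addr0.
Qed.

Lemma fDr u v w : S u -> S v -> S w -> f w (u + v) = f w u + f w v.
Proof.
move=> Su Sv Sw; rewrite hsym //; last exact: sub_add.
by rewrite fDl // (hsym Su) // (hsym Sv).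
Qed.

Lemma fZr c u w : S u -> S w -> f w (c *: u) = c * f w u.
Proof.
move=> Su Sw; rewrite hsym //; last exact: sub_scale.
by rewrite fZl // hsym.
Qed.

Lemma fBl u v w : S u -> S v -> S w -> f (u - v) w = f u w - f v w.
Proof.
move=> Su Sv Sw; have SNv : S (- v) by rewrite -scaleN1r; apply: sub_scale.
by rewrite fDl // -scaleN1r fZl // mulN1r.
Qed.

Lemma fsq u v : S u -> S v -> f (u + v) (u + v) = f u u + 2 * f u v + f v v.
Proof.
move=> Su Sv; have Suv := sub_add hS Su Sv.
rewrite fDl // !fDr // (hsym Sv Su); ring.
Qed.

Lemma fZZ c u : S u -> f (c *: u) (c *: u) = c ^+ 2 * f u u.
Proof.
move=> Su; rewrite fZl //; last exact: sub_scale.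
by rewrite fZr // mulrA expr2.
Qed.

End Form.
End Generic.

Section Lin.
Variable R : realType.
Variables X Y : lmodType R.
Variables (S : set X) (g : X -> Y).
Hypotheses (hS : subspace S) (hg : linear_on S g).

Lemma g0 : g 0 = 0.
Proof.
have S0 : S 0 by case: hS.
have := hg 1 S0 S0; rewrite !scale1r addr0.
by move=> /(congr1 (fun x => x - g 0)); rewrite subrr addrK.
Qed.

Lemma gD u v : S u -> S v -> g (u + v) = g u + g v.
Proof. by move=> Su Sv; have := hg 1 Su Sv; rewrite !scale1r. Qed.

Lemma gZ c u : S u -> g (c *: u) = c *: g u.
Proof.
move=> Su; have S0 : S 0 by case: hS.
by have := hg c Su S0; rewrite !addr0 g0 addr0.
Qed.
End Lin.

Section Psd.
Variable R : realType.
Variable X : lmodType R.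
Variables (S : set X) (f : X -> X -> R).
Hypotheses (hS : subspace S) (hsym : symmetric_on S f) (hbil : bilinear_on S f)
  (hpsd : psd_on S f).

Lemma f_cs s t u v : S u -> S v -> 2 * s * t * f u v <= s ^+ 2 * f u u + t ^+ 2 * f v v.
Proof.
move=> Su Sv.
have Su' : S (s *: u) by apply: sub_scale.
have Sv' : S ((- t) *: v) by apply: sub_scale.
have := hpsd (sub_add hS Su' Sv').
rewrite (fsq hS hsym hbil Su' Sv') !(fZZ hS hsym hbil) // (fZl hS hbil) // (fZr hS hsym hbil) //.
rewrite sqrrN; lra.
Qed.
End Psd.

Lemma ip_psd (R : realType) (X : lmodType R) (S : set X) f :
  subspace S -> inner_product_on S f -> psd_on S f.
Proof.
move=> hS [hsym hbil hpos] u Su; have [->|nz] := eqVneq u 0.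
  by rewrite (f0l hS hbil) //; case: hS.
exact/ltW/hpos.
Qed.

Lemma key_ineq (R : realType) (X B Y p Z C : R) :
  0 < p -> 0 <= Z -> 0 <= X -> 0 <= Y -> Y <= C ^+ 2 * Z ->
  (forall s t, 2 * s * t * B <= s ^+ 2 * X + t ^+ 2 * Y) ->
  (X + 2 * B + Y) / (p + Z) <= X / p + C ^+ 2.
Proof.
move=> p0 Z0 X0 Y0 YC H.
rewrite ler_pdivrMr; last lra.
have Bq : 2 * B <= X / p * Z + C ^+ 2 * p.
  have [Zp|Z0'] := ltrP 0 Z.
    have Zp0 : 0 < Z * p by apply: mulr_gt0.
    rewrite -(ler_pM2l Zp0).
    have e1 : Z * p * (X / p * Z + C ^+ 2 * p) = Z ^+ 2 * X + p ^+ 2 * (C ^+ 2 * Z).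
      field; lra.
    rewrite e1.
    have h2 := H Z p.
    have h3 : p ^+ 2 * Y <= p ^+ 2 * (C ^+ 2 * Z) by rewrite ler_pM2l // exprn_gt0.
    have e3 : Z * p * (2 * B) = 2 * Z * p * B by ring.
    rewrite e3; lra.
  have ZZ : Z = 0 by lra.
  have YY : Y = 0 by move: YC; rewrite ZZ mulr0; lra.
  have Bn : B <= 0.
    rewrite leNgt; apply/negP => Bp.
    have := H 1 ((X + 1) / (2 * B)); rewrite YY mulr0 addr0 expr1n mul1r.
    have -> : 2 * 1 * ((X + 1) / (2 * B)) * B = X + 1 by field; lra.
    lra.
  have : 0 <= X / p * Z by apply: mulr_ge0 => //; apply: divr_ge0 => //; lra.
  have : 0 <= C ^+ 2 * p by apply: mulr_ge0 => //; [exact: sqr_ge0 | lra].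
  lra.
have e2 : (X / p + C ^+ 2) * (p + Z) = X + X / p * Z + C ^+ 2 * p + C ^+ 2 * Z.
  by field; lra.
rewrite e2; lra.
Qed.

Lemma incr_ge (phi : nat -> nat) : (forall n, (phi n < phi n.+1)%N) -> forall n, (n <= phi n)%N.
Proof. move=> H; elim => // n IH; exact: leq_ltn_trans IH (H n). Qed.

Lemma inf_ge0 (R : realType) (E : set R) : (forall x, E x -> 0 <= x) -> 0 <= inf E.
Proof.
move=> H; have [->|/set0P ne] := eqVneq E set0; first by rewrite inf0.
by apply: lb_le_inf ne _ => x Ex; apply: H.
Qed.

Lemma sup_ge0 (R : realType) (E : set R) : (forall x, E x -> 0 <= x) -> 0 <= sup E.
Proof.
move=> H; have [->|/set0P [x Ex]] := eqVneq E set0; first by rewrite sup0.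
case: (pselect (has_ubound E)) => [ub|nub].
  by apply: le_trans (H x Ex) _; apply: ub_le_sup.
by rewrite sup_out // => -[].
Qed.

Lemma rayleigh_ge0 (R : realType) (X Y : lmodType R) (S : set X) (A : X -> X -> R)
  (g : X -> Y) (b : Y -> Y -> R) k (e : 'I_k -> X) :
  subspace S -> psd_on S A -> (forall y, 0 <= b y y) -> (forall i, S (e i)) ->
  (forall r, [set r : R | exists c : 'I_k -> R,
        let v := \sum_(i < k) c i *: e i in
        v != 0 /\ r = b (g v) (g v) / A v v] r -> 0 <= r).
Proof.
move=> hS hA hb He r [c [_ ->]]; apply: divr_ge0 => //.
by apply: hA; apply: sub_sum.
Qed.

Lemma minmax_ge0 (R : realType) (X Y : lmodType R) (S : set X) (A : X -> X -> R)
  (g : X -> Y) (b : Y -> Y -> R) k :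
  subspace S -> psd_on S A -> (forall y, 0 <= b y y) -> 0 <= minmax S A g b k.
Proof.
move=> hS hA hb; apply: sup_ge0 => r [e [He _] <-].
rewrite /rayleigh_inf; apply: inf_ge0 => x hx; exact: (rayleigh_ge0 hS hA hb He hx).
Qed.

Lemma indep_nz (R : realType) (X : lmodType R) k (i0 : 'I_k) (e : 'I_k -> X) :
  independent e -> \sum_(i < k) (i == i0)%:R *: e i != 0.
Proof.
move=> ind; apply/negP => /eqP H; have := ind _ H i0.
by rewrite eqxx => /eqP; rewrite oner_eq0.
Qed.

Section Main.
Variable R : realType.
Variables X W : lmodType R.
Variables (V Vh : set X) (a ah : X -> X -> R) (b : W -> W -> R)
  (gamma gammah : X -> W) (Ph : X -> X) (Ch : R).
Hypotheses (hV : subspace V) (hVh : subspace Vh).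
Hypothesis (ha : inner_product_on V a).
Hypothesis (hb : inner_product_on setT b).
Let Vt := sumset V Vh.
Hypotheses (hsym : symmetric_on Vt ah) (hbil : bilinear_on Vt ah) (hpsd : psd_on Vt ah)
  (hVhip : inner_product_on Vh ah) (haa : forall u v, V u -> V v -> ah u v = a u v)
  (hlin : linear_on Vt gammah) (hcomp : compact_on Vt ah gammah b)
  (hgg : forall u, V u -> gammah u = gamma u)
  (hP : forall u, Vt u -> Vh (Ph u) /\ forall w, Vh w -> ah (u - Ph u) w = 0)
  (hC0 : 0 <= Ch)
  (hCh : forall v, Vt v -> fnorm b (gammah (v - Ph v)) <= Ch * fnorm ah (v - Ph v)).

Lemma hVt : subspace Vt. Proof. exact: sumset_sub. Qed.
Lemma VVt u : V u -> Vt u. Proof. exact: sumset_l. Qed.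
Lemma VhVt u : Vh u -> Vt u. Proof. exact: sumset_r. Qed.

Lemma hT : subspace (@setT W). Proof. by []. Qed.
Lemma bsym : symmetric_on setT b. Proof. by case: hb. Qed.
Lemma bbil : bilinear_on setT b. Proof. by case: hb. Qed.
Lemma bpsd : psd_on setT b. Proof. exact: ip_psd hT hb. Qed.
Lemma bge0 y : 0 <= b y y. Proof. exact: bpsd. Qed.

Lemma P_unique u z : Vt u -> Vh z -> (forall w, Vh w -> ah (u - z) w = 0) -> Ph u = z.
Proof.
move=> Vtu Vhz Hz; have [VhP HP] := hP Vtu.
have Vhw : Vh (Ph u - z) by apply: sub_sub.
have Vtw := VhVt Vhw.
have e : Ph u - z = (u - z) - (u - Ph u) by rewrite opprB addrCA addrAC subrr add0r.
have Vtuz : Vt (u - z) by apply: sub_sub hVt Vtu (VhVt Vhz).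
have VtuP : Vt (u - Ph u) by apply: sub_sub hVt Vtu (VhVt VhP).
have : ah (Ph u - z) (Ph u - z) = 0.
  by rewrite {1}e (fBl hVt hbil) // Hz // HP // subrr.
case: hVhip => _ _ pos.
have [//|nz] := eqVneq (Ph u - z) 0; first by move/eqP; rewrite subr_eq0 => /eqP.
by move=> h; have := pos _ Vhw nz; rewrite h ltxx.
Qed.

Lemma P_lin c u v : Vt u -> Vt v -> Ph (c *: u + v) = c *: Ph u + Ph v.
Proof.
move=> Vtu Vtv; have [VhPu HPu] := hP Vtu; have [VhPv HPv] := hP Vtv.
apply: P_unique.
- exact: (sub_add hVt (sub_scale c hVt Vtu) Vtv).
- exact: (sub_add hVh (sub_scale c hVh VhPu) VhPv).
move=> w Vhw.
have e : c *: u + v - (c *: Ph u + Ph v) = c *: (u - Ph u) + (v - Ph v).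
  by rewrite scalerBr opprD addrACA.
have Vt1 : Vt (u - Ph u) by apply: sub_sub hVt Vtu (VhVt VhPu).
have Vt2 : Vt (v - Ph v) by apply: sub_sub hVt Vtv (VhVt VhPv).
by rewrite e hbil // ?HPu ?HPv // ?mulr0 ?addr0 //; apply: VhVt.
Qed.

Lemma P0 : Ph 0 = 0.
Proof.
have Vt0 : Vt 0 by case: hVt.
apply: P_unique => //; first by case: hVh.
by move=> w Vhw; rewrite subr0 (f0l hVt hbil) //; apply: VhVt.
Qed.

Lemma P_sum (I : Type) (r : seq I) (c : I -> R) (e : I -> X) :
  (forall i, Vt (e i)) -> Ph (\sum_(i <- r) c i *: e i) = \sum_(i <- r) c i *: Ph (e i).
Proof.
move=> He; elim: r => [|i r IH]; first by rewrite !big_nil P0.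
rewrite !big_cons P_lin ?IH //; apply: sub_sum hVt He.
Qed.

Lemma Y_le v : Vt v -> b (gammah (v - Ph v)) (gammah (v - Ph v)) <=
   Ch ^+ 2 * ah (v - Ph v) (v - Ph v).
Proof.
move=> Vtv; have [VhP _] := hP Vtv.
have Vtw : Vt (v - Ph v) by apply: sub_sub hVt Vtv (VhVt VhP).
have h := hCh Vtv; rewrite /fnorm in h.
have Z0 := hpsd Vtw.
rewrite -(sqr_sqrtr (bge0 _)) -(sqr_sqrtr Z0) -exprMn.
by apply: ler_pM => //; apply: sqrtr_ge0.
Qed.

Lemma ratio_C v : V v -> v != 0 -> Ph v = 0 ->
  b (gamma v) (gamma v) / a v v <= Ch ^+ 2.
Proof.
move=> Vv nz Pv0.
have Vtv := VVt Vv.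
have := Y_le Vtv; rewrite Pv0 subr0 hgg // haa //.
case: ha => _ _ pos; have av := pos _ Vv nz.
by rewrite ler_pdivrMr.
Qed.

Lemma ratio_le v : V v -> Ph v != 0 ->
  b (gamma v) (gamma v) / a v v <=
  b (gammah (Ph v)) (gammah (Ph v)) / ah (Ph v) (Ph v) + Ch ^+ 2.
Proof.
move=> Vv nz.
have Vtv := VVt Vv; have [VhP HP] := hP Vtv.
have VtP := VhVt VhP.
have Vtw : Vt (v - Ph v) by apply: sub_sub hVt Vtv VtP.
have ev : v = Ph v + (v - Ph v) by rewrite addrC subrK.
have eg : gamma v = gammah (Ph v) + gammah (v - Ph v).
  by rewrite -hgg // {1}ev (gD hlin).
have ea : a v v = ah (Ph v) (Ph v) + ah (v - Ph v) (v - Ph v).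
  rewrite -haa // {1 2}ev (fsq hVt hsym hbil) // (hsym VtP Vtw) HP //.
  by rewrite mulr0 addr0.
rewrite eg ea (fsq hT bsym bbil) //.
apply: key_ineq.
- by case: hVhip => _ _ pos; apply: pos.
- exact: hpsd.
- exact: bge0.
- exact: bge0.
- exact: Y_le.
- by move=> s t; apply: (f_cs hT bsym bbil bpsd).
Qed.

Lemma bound : exists M, forall v, Vh v -> b (gammah v) (gammah v) <= M * ah v v.
Proof.
apply: contrapT => NE.
have H : forall n : nat, exists v, Vh v /\ n%:R * ah v v < b (gammah v) (gammah v).
  move=> n; apply: contrapT => Hn; apply: NE; exists n%:R => v Vhv.
  by rewrite leNgt; apply/negP => lt; apply: Hn; exists v.
case: (choice H) => w Hw.
have Apos n : 0 < ah (w n) (w n).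
  have [Vhw lt] := Hw n; case: hVhip => _ _ pos; apply: pos => //.
  apply/negP => /eqP w0; move: lt; rewrite w0 (g0 hVt hlin) (f0l hT bbil) //.
  by rewrite (f0l hVt hbil) ?mulr0 ?ltxx //; case: hVt.
pose s n := Num.sqrt (ah (w n) (w n)).
have spos n : 0 < s n by rewrite sqrtr_gt0.
pose u n := (s n)^-1 *: w n.
have Vtu n : Vt (u n) by apply: (sub_scale _ hVt); apply: VhVt; case: (Hw n).
have Au n : ah (u n) (u n) = 1.
  rewrite (fZZ hVt hsym hbil); last by apply: VhVt; case: (Hw n).
  by rewrite exprVn sqr_sqrtr ?mulVf // ?(ltW (Apos n)) // gt_eqF.
have Bu n : (n%:R < b (gammah (u n)) (gammah (u n))).
  rewrite (gZ hVt hlin); last by apply: VhVt; case: (Hw n).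
  rewrite (fZZ hT bsym bbil) // exprVn sqr_sqrtr ?(ltW (Apos n)) //.
  rewrite ltr_pdivlMl ?Apos // mulrC; by case: (Hw n).
have [phi [incr [y conv]]] : exists phi : nat -> nat, (forall n, (phi n < phi n.+1)%N) /\
      exists y : W, converges_to b (fun n => gammah (u (phi n))) y.
  apply: hcomp => //; exists 1 => n; by rewrite /fnorm Au sqrtr1.
have [N HN] := conv 1 ltr01.
pose m := maxn N (Num.Def.archi_bound (2 + 2 * b y y)).
have hm : 2 + 2 * b y y < m%:R.
  apply: lt_le_trans (archi_boundP _) _; first by have := bge0 y; lra.
  by rewrite ler_nat leq_maxr.
have hphim : m%:R <= (phi m)%:R :> R by rewrite ler_nat; apply: incr_ge.
pose g := gammah (u (phi m)).
have hg1 : b (g - y) (g - y) < 1.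
  have h := HN m (leq_maxl _ _); rewrite /fnorm in h.
  by rewrite -ltr_sqrt ?ltr01 // sqrtr1.
have hg2 : b g g <= 2 * b (g - y) (g - y) + 2 * b y y.
  have eg : g = (g - y) + y by rewrite subrK.
  rewrite {1 2}eg (fsq hT bsym bbil) //.
  have := f_cs hT bsym bbil bpsd 1 1 (u := g - y) (v := y) I I.
  rewrite !expr1n !mul1r mulr1; lra.
have := Bu (phi m); rewrite -/g; lra.
Qed.

Lemma main_ineq k : (0 < k)%N -> (exists e : 'I_k -> X, dim_family V e) ->
  minmax V a gamma b k <= minmax Vh ah gammah b k + Ch ^+ 2.
Proof.
move=> hk [e0 he0].
have hpa : psd_on V a := ip_psd hV ha.
have hpah : psd_on Vh ah := ip_psd hVh hVhip.
pose i0 : 'I_k := Ordinal hk.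
apply: ge_sup; first by exists (rayleigh_inf a gamma b e0), e0.
move=> r [e [Ve inde] <-].
have hlb : has_lbound [set r : R | exists c : 'I_k -> R,
        let v := \sum_(i < k) c i *: e i in
        v != 0 /\ r = b (gamma v) (gamma v) / a v v].
  by exists 0 => x hx; exact: (rayleigh_ge0 (g:=gamma) (b:=b) hV hpa bge0 Ve hx).
case: (pselect (exists c : 'I_k -> R, \sum_(i < k) c i *: e i != 0 /\
    Ph (\sum_(i < k) c i *: e i) = 0)) => [[c [nz Pz]]|Hn].
  apply: le_trans (ge_inf hlb _) _; first by exists c; split.
  apply: le_trans (ratio_C _ nz Pz) _; first exact: sub_sum.
  by rewrite lerDr; apply: minmax_ge0 => //; exact: bge0.
pose f i := Ph (e i).
have Pe c : Ph (\sum_(i < k) c i *: e i) = \sum_(i < k) c i *: f i.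
  by apply: P_sum => i; apply: VVt.
have Vhf : forall i, Vh (f i) by move=> i; case: (hP (VVt (Ve i))).
have indf : independent f.
  move=> c Hc; apply: inde; apply: contrapT => nz; apply: Hn; exists c; split.
    by apply/eqP.
  by rewrite Pe.
have [M HM] := bound.
have hub : has_ubound [set rayleigh_inf ah gammah b e | e in [set e : 'I_k -> X | dim_family Vh e]].
  exists M => _ [f' [Vhf' indf'] <-].
  have hlb' : has_lbound [set r : R | exists c : 'I_k -> R,
        let v := \sum_(i < k) c i *: f' i in
        v != 0 /\ r = b (gammah v) (gammah v) / ah v v].
    by exists 0 => x hx; exact: (rayleigh_ge0 (g:=gammah) (b:=b) hVh hpah bge0 Vhf' hx).
  apply: le_trans (ge_inf hlb' _) _; first by exists (fun i => (i == i0)%:R); split; [apply: indep_nz|].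
  have Vv : Vh (\sum_(i < k) (i == i0)%:R *: f' i) by apply: sub_sum.
  case: hVhip => _ _ pos.
  by rewrite ler_pdivrMr ?pos ?indep_nz //; apply: HM.
apply: (@le_trans _ _ (rayleigh_inf ah gammah b f + Ch ^+ 2)); last first.
  by rewrite lerD2r; apply: ub_le_sup => //; exists f.
rewrite -lerBlDr; apply: lb_le_inf.
  by exists (b (gammah (\sum_(i < k) (i == i0)%:R *: f i)) (gammah (\sum_(i < k) (i == i0)%:R *: f i)) /
    ah (\sum_(i < k) (i == i0)%:R *: f i) (\sum_(i < k) (i == i0)%:R *: f i)),
    (fun i => (i == i0)%:R); split; [apply: indep_nz|].
move=> _ [c [nz ->]]; rewrite lerBlDr.
have Vv : V (\sum_(i < k) c i *: e i) by apply: sub_sum.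
rewrite -Pe in nz *.
apply: le_trans (ge_inf hlb _) (ratio_le Vv nz).
exists c; split => //; apply/negP => /eqP v0; move: nz; rewrite v0 P0 eqxx.
by [].
Qed.

Lemma mu_ge0 k : 0 <= minmax V a gamma b k.
Proof. apply: minmax_ge0 => //; [exact: ip_psd hV ha | exact: bge0]. Qed.

End Main.
Theorem theorem3p1 (R : realType) (X W : lmodType R) (V Vh : set X) (d : nat)
    (a ah : X -> X -> R) (b : W -> W -> R) (gamma gammah : X -> W)
    (Ph : X -> X) (Ch : R) :
  subspace V -> subspace Vh -> (exists e : 'I_d -> X, basis_of_set Vh e) ->
  inner_product_on V a -> complete_on V a -> separable_on V a ->
  inner_product_on setT b -> complete_on setT b -> separable_on setT b ->
  linear_on V gamma -> compact_on V a gamma b ->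
  let Vt := sumset V Vh in
  symmetric_on Vt ah -> bilinear_on Vt ah -> psd_on Vt ah ->
  inner_product_on Vh ah ->
  (forall u v, V u -> V v -> ah u v = a u v) ->
  linear_on Vt gammah -> compact_on Vt ah gammah b ->
  (forall u, V u -> gammah u = gamma u) ->
  (forall u, Vt u -> Vh (Ph u) /\ forall w, Vh w -> ah (u - Ph u) w = 0) ->
  0 <= Ch ->
  (forall v, Vt v -> fnorm b (gammah (v - Ph v)) <= Ch * fnorm ah (v - Ph v)) ->
  forall k : nat, (1 <= k <= d)%N -> (exists e : 'I_k -> X, dim_family V e) ->
    minmax V a gamma b k <= minmax Vh ah gammah b k + Ch ^+ 2 /\
    (0 < minmax Vh ah gammah b k ->
      let lamh := (minmax Vh ah gammah b k)^-1 in
      ((lamh / (1 + Ch ^+ 2 * lamh))%:E <= recip_ext (minmax V a gamma b k))%E).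
Proof.
move=> hV hVh _ ha _ _ hb _ _ _ _ Vt hsym hbil hpsd hVhip haa hlin hcomp hgg hP hC0 hCh
  k /andP[hk _] he.
have H1 : minmax V a gamma b k <= minmax Vh ah gammah b k + Ch ^+ 2.
  exact: (main_ineq hV hVh ha hb hsym hbil hpsd hVhip haa hlin hcomp hgg hP hCh hk he).
split => // muh /=.
have mu0 : 0 <= minmax V a gamma b k := mu_ge0 gamma hV ha hb k.
rewrite /recip_ext; case: eqP => [_|/eqP mun0]; first exact: leey.
rewrite lee_fin.
set mh := minmax Vh ah gammah b k in muh H1 *.
set mu := minmax V a gamma b k in mu0 mun0 H1 *.
have mupos : 0 < mu by rewrite lt_neqAle eq_sym mun0.
have C2 : 0 <= Ch ^+ 2 by apply: sqr_ge0.
have -> : mh^-1 / (1 + Ch ^+ 2 * mh^-1) = (mh + Ch ^+ 2)^-1.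
  field; apply/andP; split; apply/negP => /eqP h; lra.
rewrite lef_pV2 ?posrE //; lra.
Qed.
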